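(* Let $n\ge 3$ and $a<b<c$ be elements of $\mathcal{C}_n=\{0,1,\dots,n-1\}$. Let $\triangle=\triangle^{(n)}\{a,b,c\}$, let $\mathcal{IT}=\{\alpha\in\triangle:\ \alpha(a)=a,\ \alpha(c)=c\}$ be the idempotent triangle, let $\mathcal{RI}$ be the set of right identities of $\triangle$, and let $Id\left(\mathcal{STR}^{(n)}\{a,c\}\right)=\{a_kc_{n-k}:\ a+1\le k\le c\}$. Then: (i) $\mathcal{RI}$ is a subsemiring of $\mathcal{IT}$ with exactly $(b-a)(c-b)$ elements; (ii) $\mathcal{IT}\setminus\mathcal{RI}$ is a subsemiring of $\mathcal{IT}$ with exactly $\frac12\left((c-b)^2+(b-a)^2+c-a\right)$ elements; (iii) both $Id\left(\mathcal{STR}^{(n)}\{a,c\}\right)$ and $\mathcal{IT}\setminus\mathcal{RI}$ are ideals of the semiring $\mathcal{IT}$.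
   Context: $\mathcal{C}_n=\{0,1,\dots,n-1\}$ is the chain with its usual order, regarded as a join-semilattice with $x\vee y=\max(x,y)$. $\widehat{\mathcal{E}}_{\mathcal{C}_n}$ denotes the set of all endomorphisms of $(\mathcal{C}_n,\vee)$, i.e. all order-preserving maps $\alpha:\mathcal{C}_n\to\mathcal{C}_n$ (it is not required that $\alpha(0)=0$). It is a semiring with addition $(\alpha+\beta)(x)=\max(\alpha(x),\beta(x))$ and multiplication written ''first $\alpha$, then $\beta$'': $(\alpha\cdot\beta)(x)=\beta(\alpha(x))$. For $x_1<\dots<x_r$ in $\mathcal{C}_n$ and nonnegative integers $k_1,\dots,k_r$ with $k_1+\dots+k_r=n$, the notation $(x_1)_{k_1}(x_2)_{k_2}\cdots(x_r)_{k_r}$ denotes the map sending the first $k_1$ elements $0,\dots,k_1-1$ to $x_1$, the next $k_2$ elements to $x_2$, and so on; a subscript $1$ may be omitted and a factor with subscript $0$ omitted. $\overline{x}$ denotes the constant map with value $x$. The triangle $\triangle^{(n)}\{a,b,c\}$ is the set of all $\alpha\in\widehat{\mathcal{E}}_{\mathcal{C}_n}$ with image contained in $\{a,b,c\}$ (a subsemiring). A right identity of $\triangle$ is an element $e\in\triangle$ with $\alpha\cdot e=\alpha$ for all $\alpha\in\triangle$. A subsemiring is a nonempty subset closed under $+$ and $\cdot$; an ideal $I$ of a semiring $R$ is a nonempty subset with $I+I\subseteq I$, $RI\subseteq I$, $IR\subseteq I$. *)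

(* Defs.v *)
From mathcomp Require Import all_boot.
Set Implicit Arguments. Unset Strict Implicit. Unset Printing Implicit Defensive.

Definition endo (n : nat) := {ffun 'I_n -> 'I_n}.

(* order-preserving = endomorphism of the join-semilattice (C_n, max) *)
Definition monotone n (f : endo n) : bool :=
  [forall x : 'I_n, forall y : 'I_n, (x <= y) ==> (f x <= f y)].

Definition eadd n (f g : endo n) : endo n :=
  [ffun x => if f x <= g x then g x else f x].

(* (alpha . beta)(x) = beta(alpha x)  ("first alpha, then beta") *)
Definition emul n (f g : endo n) : endo n := [ffun x => g (f x)].

Definition triangle n (a b c : 'I_n) : {set endo n} :=
  [set f : endo n | monotone f & [forall x, f x \in [:: a; b; c]]].

Definition IT n (a b c : 'I_n) : {set endo n} :=
  [set f in triangle a b c | (f a == a) && (f c == c)].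

Definition RI n (a b c : 'I_n) : {set endo n} :=
  [set e in triangle a b c | [forall f in triangle a b c, emul f e == f]].

(* the map a_k c_{n-k}: first k elements to a, the rest to c *)
Definition step n (a c : 'I_n) (k : nat) : endo n :=
  [ffun x : 'I_n => if x < k then a else c].

Definition IdSTR n (a c : 'I_n) : {set endo n} :=
  [set f : endo n | [exists k : 'I_n.+1, (a.+1 <= k <= c) && (f == step a c k)]].

Definition subsemiring n (S R : {set endo n}) : Prop :=
  [/\ S \subset R, S != set0,
      (forall f g, f \in S -> g \in S -> eadd f g \in S) &
      (forall f g, f \in S -> g \in S -> emul f g \in S)].

(* I is an ideal of the semiring R (R assumed closed under + and .) *)
Definition ideal n (I R : {set endo n}) : Prop :=
  [/\ I \subset R, I != set0,
      (forall f g, f \in I -> g \in I -> eadd f g \in I),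
      (forall r f, r \in R -> f \in I -> emul r f \in I) &
      (forall f r, f \in I -> r \in R -> emul f r \in I)].

(* Main.v *)
Require Import Defs.
From mathcomp Require Import all_boot zify.
Set Warnings "-notation-overridden".
Set Implicit Arguments. Unset Strict Implicit. Unset Printing Implicit Defensive.

Lemma tri_vals n (a b c : 'I_n) f : f \in triangle a b c ->
  (forall x y : 'I_n, x <= y -> f x <= f y) /\ (forall x, [\/ f x = a, f x = b | f x = c]).
Proof.
rewrite inE => /andP[/forallP hm /forallP hv]; split.
  by move=> x y hxy; move: (hm x) => /forallP /(_ y) /implyP; apply.
move=> x; move: (hv x); rewrite !inE => /or3P[] /eqP ->; by [constructor 1|constructor 2|constructor 3].
Qed.

Lemma tri_intro n (a b c : 'I_n) (f : endo n) :
  (forall x y : 'I_n, x <= y -> f x <= f y) -> (forall x, [\/ f x = a, f x = b | f x = c]) ->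
  f \in triangle a b c.
Proof.
move=> hm hv; rewrite inE; apply/andP; split.
  by apply/forallP => x; apply/forallP => y; apply/implyP => /hm.
by apply/forallP => x; rewrite !inE; case: (hv x) => ->; rewrite eqxx ?orbT.
Qed.

Lemma maxmono (u v u' v' : nat) : u <= u' -> v <= v' ->
  (if u <= v then v else u) <= (if u' <= v' then v' else u').
Proof. by move=> *; repeat case: ifP => ?; lia. Qed.

Lemma tri_add n (a b c : 'I_n) f g : f \in triangle a b c -> g \in triangle a b c ->
  eadd f g \in triangle a b c.
Proof.
move=> /tri_vals [hf vf] /tri_vals [hg vg]; apply: tri_intro.
  move=> x y hxy; rewrite !ffunE !(fun_if (@nat_of_ord n)); apply: maxmono; [exact: hf|exact: hg].
by move=> x; rewrite ffunE; case: ifP.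
Qed.

Lemma tri_mul n (a b c : 'I_n) f g : f \in triangle a b c -> g \in triangle a b c ->
  emul f g \in triangle a b c.
Proof.
move=> /tri_vals [hf vf] /tri_vals [hg vg]; apply: tri_intro.
  by move=> x y hxy; rewrite !ffunE; apply/hg/hf.
by move=> x; rewrite ffunE.
Qed.

Lemma IT_E n (a b c : 'I_n) f : (f \in IT a b c) = [&& f \in triangle a b c, f a == a & f c == c].
Proof. by rewrite inE. Qed.

Lemma IT_add n (a b c : 'I_n) f g : f \in IT a b c -> g \in IT a b c -> eadd f g \in IT a b c.
Proof.
rewrite !IT_E => /and3P[tf /eqP fa /eqP fc] /and3P[tg /eqP ga /eqP gc].
by rewrite tri_add // !ffunE fa ga fc gc !leqnn !eqxx.
Qed.

Lemma IT_mul n (a b c : 'I_n) f g : f \in IT a b c -> g \in IT a b c -> emul f g \in IT a b c.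
Proof.
rewrite !IT_E => /and3P[tf /eqP fa /eqP fc] /and3P[tg /eqP ga /eqP gc].
by rewrite tri_mul // !ffunE fa ga fc gc !eqxx.
Qed.

Lemma RI_E n (a b c : 'I_n) e : a < b -> b < c ->
  (e \in RI a b c) = (e \in IT a b c) && (e b == b).
Proof.
move=> hab hbc; rewrite inE IT_E.
have cst : forall v, v \in [:: a; b; c] -> [ffun=> v] \in triangle a b c.
  move=> v hv; rewrite inE; apply/andP; split.
    by apply/forallP => x; apply/forallP => y; rewrite !ffunE leqnn implybT.
  by apply/forallP => x; rewrite ffunE.
apply/idP/idP.
- move=> /andP[te /forallP H].
  have fix1 : forall v, v \in [:: a; b; c] -> e v = v.
    move=> v hv; move: (H [ffun=> v]); rewrite cst //= => /eqP /ffunP /(_ v).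
    by rewrite !ffunE.
  by rewrite te fix1 ?fix1 ?inE ?eqxx ?orbT.
- move=> /andP[/and3P[te /eqP ea /eqP ec] /eqP eb]; rewrite te /=.
  apply/forallP => f; apply/implyP => tf; apply/eqP/ffunP => x; rewrite ffunE.
  by have [_ vf] := tri_vals tf; case: (vf x) => ->.
Qed.
Lemma L1 N l h : \sum_(0 <= i < N) (l <= i <= h) = minn N h.+1 - minn N l.
Proof.
elim: N => [|N IH]; first by rewrite big_geq.
rewrite big_nat_recr //= IH.
case: (leqP l N) => H1; case: (leqP N h) => H2 /=; lia.
Qed.

Lemma Sl lo hi : 2 * \sum_(0 <= i < hi.+1) (lo < i) * (hi.+1 - i) = (hi - lo) * (hi - lo).+1.
Proof.
elim: hi => [|hi IH].
  rewrite big_nat1; lia.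
rewrite big_nat_recr //=.
rewrite (eq_big_nat _ _ (F2 := fun i => (lo < i) * (hi.+1 - i) + (lo < i))); last first.
  move=> i /andP[_ Hi]; lia.
rewrite big_split /= !mulnDr IH.
have := L1 hi.+1 lo.+1 hi.
rewrite (eq_big_nat _ _ (F2 := fun i => nat_of_bool (lo < i))); last first.
  move=> i /andP[_ Hi]; lia.
move=> ->. nia.
Qed.

Lemma Tri lo hi N : hi < N ->
  2 * \sum_(0<=i<N) \sum_(0<=j<N) ((lo < i) && (i <= j <= hi)) = (hi-lo)*(hi-lo).+1.
Proof.
move=> hN.
rewrite (eq_big_nat _ _ (F2 := fun i => (lo < i) * (hi.+1 - i))); last first.
  move=> i /andP[_ Hi].
  rewrite (eq_bigr (fun j => (lo < i) * (i <= j <= hi))); last by move=> j _; lia.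
  rewrite -big_distrr /= L1; lia.
rewrite (big_cat_nat _ (n := hi.+1)) //= -[X in _ = X](Sl lo hi).
rewrite [X in _ + X]big1_seq ?addn0 // => i /andP[_].
rewrite mem_index_iota => /andP[Hi _]; lia.
Qed.

Lemma Rect a b c N : c < N ->
  \sum_(0<=i<N) \sum_(0<=j<N) ((a < i <= b) && (b < j <= c)) = (b - a) * (c - b).
Proof.
move=> hN.
rewrite (eq_big_nat _ _ (F2 := fun i => (a < i <= b) * (c - b))); last first.
  move=> i /andP[_ Hi].
  rewrite (eq_bigr (fun j => (a < i <= b) * (b.+1 <= j <= c))); last by move=> j _; lia.
  rewrite -big_distrr /= L1; lia.
rewrite -big_distrl /= L1; lia.
Qed.
Lemma cardP2 N (P : nat -> nat -> bool) :
  #|[set pq : 'I_N * 'I_N | P pq.1 pq.2]| = \sum_(0 <= i < N) \sum_(0 <= j < N) P i j.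
Proof.
rewrite big_mkord (eq_bigr (fun i : 'I_N => \sum_(j < N) (P i j : nat))); last by move=> i _; rewrite big_mkord.
rewrite pair_big /= -sum1_card big_mkcond /=; apply: eq_bigr => [[i j]] _ /=.
by rewrite inE; case: (P i j).
Qed.
Definition gpq n (a b c : 'I_n) (p q : nat) : endo n :=
  [ffun x : 'I_n => (if x < p then a else if x < q then b else c) : 'I_n].

Lemma g_IT n (a b c : 'I_n) p q : a < b -> b < c -> a < p -> p <= q -> q <= c ->
  gpq a b c p q \in IT a b c.
Proof.
move=> hab hbc hap hpq hqc.
rewrite !inE; apply/andP; split; first (apply/andP; split).
- apply/forallP => x; apply/forallP => y; apply/implyP => hxy; rewrite !ffunE.
  by repeat case: ifP => ?; lia.
- apply/forallP => x; rewrite ffunE !inE.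
  by repeat case: ifP => ?; rewrite eqxx ?orbT.
- rewrite !ffunE hap eqxx /=.
  have -> : (c < p) = false by lia.
  have -> : (c < q) = false by lia.
  by [].
Qed.

Lemma IT_g n (a b c : 'I_n) f : a < b -> b < c -> f \in IT a b c ->
  exists pq : 'I_n * 'I_n, [&& a < pq.1, pq.1 <= pq.2 & pq.2 <= c] /\ f = gpq a b c pq.1 pq.2.
Proof.
case: n a b c f => [|n] a b c f; first by case: a.
move=> hab hbc; rewrite inE => /andP[ht /andP[/eqP fa /eqP fc]].
have [hm hv] := tri_vals ht.
have hcn : c < n.+1 := ltn_ord c.
have hba : (b == a) = false by apply/eqP => /(congr1 val) /=; lia.
have hca : (c == a) = false by apply/eqP => /(congr1 val) /=; lia.
have hcb : (c == b) = false by apply/eqP => /(congr1 val) /=; lia.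
have exA : exists k, (k < n.+1) ==> (f (inord k) != a) by exists n.+1; rewrite ltnn.
have exC : exists k, (k < n.+1) ==> (f (inord k) == c) by exists n.+1; rewrite ltnn.
case: (ex_minnP exA) => p Hp Hpmin.
case: (ex_minnP exC) => q Hq Hqmin.
have cA : forall x : 'I_n.+1, (f x == a) = (x < p).
  move=> x; case: (ltnP x p) => hx.
    apply/negbNE/negP => hne.
    have := Hpmin x; rewrite ltn_ord inord_val => /(_ hne); lia.
  have hp : p < n.+1 by apply: leq_ltn_trans hx (ltn_ord x).
  move: Hp; rewrite hp /= => hne.
  have := hm (inord p) x; rewrite inordK // => /(_ hx) hle.
  apply/negbTE; move: hne hle.
  by case: (hv (inord p)) => ->; case: (hv x) => ->; rewrite ?eqxx ?hba ?hca ?hcb //=; lia.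
have cC : forall x : 'I_n.+1, (f x == c) = (q <= x).
  move=> x; case: (ltnP x q) => hx; last first.
    have hq : q < n.+1 by apply: leq_ltn_trans hx (ltn_ord x).
    move: Hq; rewrite hq /= => /eqP hqc.
    have := hm (inord q) x; rewrite inordK // => /(_ hx) hle.
    apply/eqP; move: hle; rewrite hqc.
    case: (hv x) => -> //; lia.
  apply/negbTE/negP => heq.
  have := Hqmin x; rewrite ltn_ord inord_val => /(_ heq); lia.
have hap : a < p by rewrite -cA fa eqxx.
have hqc : q <= c by rewrite -cC fc eqxx.
have hpq : p <= q.
  rewrite leqNgt; apply/negP => hqp.
  have hq : q < n.+1 by lia.
  have := cA (inord q); have := cC (inord q); rewrite inordK // leqnn hqp.
  by move=> /eqP -> /eqP /(congr1 val) /=; lia.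
have hp : p < n.+1 by lia.
have hq : q < n.+1 by lia.
exists (Ordinal hp, Ordinal hq); split; first by rewrite /= hap hpq hqc.
apply/ffunP => x; rewrite ffunE /=.
case: ifP => h1; first by apply/eqP; rewrite cA.
case: ifP => h2; last by apply/eqP; rewrite cC; lia.
have := cA x; have := cC x; rewrite h1.
have -> : (q <= x) = false by lia.
by case: (hv x) => ->; rewrite ?eqxx.
Qed.

Definition Dom n (a c : 'I_n) : {set 'I_n * 'I_n} :=
  [set pq : 'I_n * 'I_n | [&& a < pq.1, pq.1 <= pq.2 & pq.2 <= c]].

Lemma gpq_inj n (a b c : 'I_n) : a < b -> b < c ->
  {in Dom a c &, injective (fun pq : 'I_n * 'I_n => gpq a b c pq.1 pq.2)}.
Proof.
move=> hab hbc [p q] [p' q']; rewrite !inE /= => /and3P[h1 h2 h3] /and3P[h1' h2' h3'] /ffunP E.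
have ep : p = p' :> nat.
  apply/eqP; rewrite eqn_leq; apply/andP; split; rewrite leqNgt; apply/negP => hlt.
  - by move: (E p'); rewrite !ffunE; repeat (case: ifP => ?); move=> /(congr1 val) /=; lia.
  - by move: (E p); rewrite !ffunE; repeat (case: ifP => ?); move=> /(congr1 val) /=; lia.
have eq : q = q' :> nat.
  apply/eqP; rewrite eqn_leq; apply/andP; split; rewrite leqNgt; apply/negP => hlt.
  - by move: (E q'); rewrite !ffunE; repeat (case: ifP => ?); move=> /(congr1 val) /=; lia.
  - by move: (E q); rewrite !ffunE; repeat (case: ifP => ?); move=> /(congr1 val) /=; lia.
by congr pair; apply: val_inj.
Qed.

Lemma card_ITQ n (a b c : 'I_n) (Q : pred (endo n)) : a < b -> b < c ->
  #|[set f in IT a b c | Q f]| =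
  #|[set pq in Dom a c | Q (gpq a b c pq.1 pq.2)]|.
Proof.
move=> hab hbc.
rewrite -[RHS](card_in_imset (f := fun pq : 'I_n * 'I_n => gpq a b c pq.1 pq.2)); last first.
  move=> x y /setIdP[hx _] /setIdP[hy _]; exact: (gpq_inj hab hbc hx hy).
apply: eq_card => f; rewrite inE; apply/idP/idP.
- move=> /andP[hf hQ]; have := IT_g hab hbc hf; case=> pq [hpq E]; rewrite E in hQ *.
  have := @imset_f _ _ (fun pq : 'I_n * 'I_n => gpq a b c pq.1 pq.2) [set pq in Dom a c | Q (gpq a b c pq.1 pq.2)] pq.
  by apply; rewrite !inE hpq.
- case/imsetP => pq /setIdP[hD hQ] ->; rewrite hQ andbT.
  by move: hD; rewrite inE => /and3P[h1 h2 h3]; apply: g_IT.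
Qed.

Lemma gpq_b n (a b c : 'I_n) p q : a < b -> b < c ->
  (gpq a b c p q b == b) = (p <= b < q).
Proof.
move=> hab hbc.
have hab' : (a == b) = false by apply/eqP => /(congr1 val) /=; lia.
have hcb' : (c == b) = false by apply/eqP => /(congr1 val) /=; lia.
rewrite ffunE; case: (ltnP b p) => h1; first by rewrite hab'; lia.
case: (ltnP b q) => h2; first by rewrite eqxx; lia.
by rewrite hcb'; lia.
Qed.

Lemma card_RI n (a b c : 'I_n) : a < b -> b < c -> #|RI a b c| = (b - a) * (c - b).
Proof.
move=> hab hbc.
have -> : RI a b c = [set f in IT a b c | f b == b].
  by apply/setP => f; rewrite RI_E // [in RHS]inE.
rewrite card_ITQ //.
rewrite (_ : [set pq in Dom a c | gpq a b c pq.1 pq.2 b == b] =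
             [set pq : 'I_n * 'I_n | (a < pq.1 <= b) && (b < pq.2 <= c)]); last first.
  by apply/setP => -[[p hp] [q hq]]; rewrite !inE (gpq_b _ _ hab hbc) /=; lia.
by rewrite (@cardP2 _ (fun i j => (a < i <= b) && (b < j <= c))) Rect.
Qed.

Lemma NB_E n (a b c : 'I_n) f : a < b -> b < c ->
  (f \in IT a b c :\: RI a b c) = (f \in IT a b c) && (f b != b).
Proof. move=> hab hbc; rewrite in_setD (RI_E _ hab hbc). by case: (f b == b); rewrite /= ?andbT ?andbF ?andNb. Qed.

Lemma card_NB n (a b c : 'I_n) : a < b -> b < c ->
  2 * #|IT a b c :\: RI a b c| = (c - b) ^ 2 + (b - a) ^ 2 + c - a.
Proof.
move=> hab hbc.
have -> : IT a b c :\: RI a b c = [set f in IT a b c | f b != b].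
  by apply/setP => f; rewrite NB_E // [in RHS]inE.
rewrite card_ITQ //.
rewrite (_ : [set pq in Dom a c | gpq a b c pq.1 pq.2 b != b] =
             [set pq : 'I_n * 'I_n | ((a < pq.1) && (pq.1 <= pq.2 <= b)) ||
                                     ((b < pq.1) && (pq.1 <= pq.2 <= c))]); last first.
  by apply/setP => -[[p hp] [q hq]]; rewrite !inE (gpq_b _ _ hab hbc) /=; lia.
rewrite (@cardP2 _ (fun i j => ((a < i) && (i <= j <= b)) || ((b < i) && (i <= j <= c)))).
rewrite (eq_big_nat _ _ (F2 := fun i => \sum_(0<=j<n) ((a < i) && (i <= j <= b)) +
                                     \sum_(0<=j<n) ((b < i) && (i <= j <= c)))); last first.
  by move=> i _; rewrite -big_split; apply: eq_big_nat => j _ /=; lia.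
have hcn : c < n := ltn_ord c.
rewrite big_split /= mulnDr !Tri //.
rewrite !expnS expn0 !muln1; nia.
Qed.

Lemma IdSTR_E n (a b c : 'I_n) f : a < b -> b < c ->
  (f \in IdSTR a c) = (f \in IT a b c) && [forall x, f x != b].
Proof.
move=> hab hbc.
have hab' : (a == b) = false by apply/eqP => /(congr1 val) /=; lia.
have hcb' : (c == b) = false by apply/eqP => /(congr1 val) /=; lia.
rewrite inE; apply/idP/idP.
- case/existsP => k /andP[/andP[h1 h2] /eqP ->].
  have -> : step a c k = gpq a b c k k.
    by apply/ffunP => x; rewrite !ffunE; case: ifP.
  rewrite g_IT //=; apply/forallP => x; rewrite ffunE.
  by case: (ltnP x k) => _; rewrite ?hab' ?hcb'.
- case/andP => hf /forallP hnb.
  have [[p q] [/and3P[h1 h2 h3] E]] := IT_g hab hbc hf.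
  have epq : p = q :> nat.
    apply/eqP; rewrite eqn_leq h2 /= leqNgt; apply/negP => hlt.
    by move: (hnb p); rewrite E ffunE /= ltnn hlt eqxx.
  have hp : p < n.+1 by apply: leqW (ltn_ord p).
  apply/existsP; exists (Ordinal hp) => /=; rewrite h1 /=.
  apply/andP; split; first exact: leq_trans h2 h3.
  rewrite E; apply/eqP/ffunP => x; rewrite !ffunE /=.
  by rewrite -epq; case: (ltnP x p).
Qed.

Lemma IT_info n (a b c : 'I_n) f : f \in IT a b c ->
  [/\ forall x, [\/ f x = a, f x = b | f x = c], f a = a & f c = c].
Proof.
rewrite IT_E => /and3P[t /eqP -> /eqP ->]; split => //.
by have [_ v] := tri_vals t.
Qed.

Lemma eadd_val n (f g : endo n) x : eadd f g x = f x \/ eadd f g x = g x.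
Proof. by rewrite ffunE; case: ifP; [right|left]. Qed.

Unset Implicit Arguments.
Theorem theorem33 (n : nat) (a b c : 'I_n) :
  3 <= n -> a < b -> b < c ->
  (subsemiring (RI a b c) (IT a b c) /\ #|RI a b c| = (b - a) * (c - b))
  /\ (subsemiring (IT a b c :\: RI a b c) (IT a b c) /\
      2 * #|IT a b c :\: RI a b c| = (c - b) ^ 2 + (b - a) ^ 2 + c - a)
  /\ (ideal (IdSTR a c) (IT a b c) /\ ideal (IT a b c :\: RI a b c) (IT a b c)).
Proof.
move=> _ hab hbc.
have hab' : (a == b) = false by apply/eqP => /(congr1 val) /=; lia.
have hcb' : (c == b) = false by apply/eqP => /(congr1 val) /=; lia.
have NB_ne : IT a b c :\: RI a b c != set0.
  apply/set0Pn; exists (gpq a b c a.+1 a.+1).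
  rewrite NB_E // g_IT //=; last by lia.
  by rewrite (gpq_b _ _ hab hbc); lia.
have NB_add : forall f g, f \in IT a b c :\: RI a b c -> g \in IT a b c :\: RI a b c ->
    eadd f g \in IT a b c :\: RI a b c.
  move=> f g; rewrite !NB_E // => /andP[hf fb] /andP[hg gb].
  by rewrite IT_add //=; case: (eadd_val f g b) => ->.
have NB_mulr : forall f r, f \in IT a b c :\: RI a b c -> r \in IT a b c ->
    emul f r \in IT a b c :\: RI a b c.
  move=> f r; rewrite !NB_E // => /andP[hf fb] hr.
  rewrite IT_mul //= ffunE.
  have [vf _ _] := IT_info hf; have [_ ra rc] := IT_info hr.
  by case: (vf b) fb => ->; rewrite ?eqxx // ?ra ?rc ?hab' ?hcb'.
have NB_mull : forall r f, r \in IT a b c -> f \in IT a b c :\: RI a b c ->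
    emul r f \in IT a b c :\: RI a b c.
  move=> r f hr; rewrite !NB_E // => /andP[hf fb].
  rewrite IT_mul //= ffunE.
  have [_ fa fc] := IT_info hf; have [vr _ _] := IT_info hr.
  by case: (vr b) => ->; rewrite ?fa ?fc ?hab' ?hcb'.
have NB_sub : IT a b c :\: RI a b c \subset IT a b c by apply: subsetDl.
have Id_ne : IdSTR a c != set0.
  apply/set0Pn; exists (gpq a b c c c).
  rewrite (IdSTR_E _ hab hbc) g_IT //=; last by lia.
  apply/forallP => x; rewrite ffunE.
  by case: (ltnP x c) => _; rewrite ?hab' ?hcb'.
split; [split|split; [split|split]].
- split.
  + apply/subsetP => f; rewrite RI_E // => /andP[] //.
  + apply/set0Pn; exists (gpq a b c b c).
    rewrite RI_E // (gpq_b _ _ hab hbc) leqnn hbc !andbT; apply: g_IT => //; exact: ltnW.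
  + move=> f g; rewrite !RI_E // => /andP[hf /eqP fb] /andP[hg /eqP gb].
    by rewrite IT_add // ffunE fb gb leqnn eqxx.
  + move=> f g; rewrite !RI_E // => /andP[hf /eqP fb] /andP[hg /eqP gb].
    by rewrite IT_mul // ffunE fb gb eqxx.
- exact: card_RI.
- split => //; move=> f g hf hg; apply: NB_mulr => //; exact: (subsetP NB_sub).
- exact: card_NB.
- split => //.
  + by apply/subsetP => f; rewrite (IdSTR_E _ hab hbc) => /andP[].
  + move=> f g; rewrite !(IdSTR_E _ hab hbc) => /andP[hf /forallP fb] /andP[hg /forallP gb].
    rewrite IT_add //=; apply/forallP => x.
    by case: (eadd_val f g x) => ->.
  + move=> r f hr; rewrite !(IdSTR_E _ hab hbc) => /andP[hf /forallP fb].
    rewrite IT_mul //=; apply/forallP => x; rewrite ffunE; exact: fb.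
  + move=> f r; rewrite !(IdSTR_E _ hab hbc) => /andP[hf /forallP fb] hr.
    rewrite IT_mul //=; apply/forallP => x; rewrite ffunE.
    have [vf _ _] := IT_info hf; have [_ ra rc] := IT_info hr.
    by move: (fb x); case: (vf x) => ->; rewrite ?eqxx // ?ra ?rc ?hab' ?hcb'.
- by split.
Qed.
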